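(* Let $\sigma\in\Sigma^0_{E_N}$ be non-trivial, and assume there is an edge $e\in\mathrm{supp}\,\sigma$ with $\partial\hat\partial\partial\hat\partial e\subseteq E_N$. Then $|(\mathrm{supp}\,\sigma)^+|\ge 8$.
   Context: Work on $\mathbb Z^4$; oriented edges come in pairs $e,-e$; $dx_j=(x,x+\mathbf e_j)$ positively oriented. For a plaquette $p=dx_{j_1}\wedge dx_{j_2}$ ($j_1<j_2$), $\partial p=\{dx_{j_1},d(x+\mathbf e_{j_1})_{j_2},-d(x+\mathbf e_{j_2})_{j_1},-dx_{j_2}\}$, $\partial(-p)=-\partial p$. $\hat\partial e=\{p:e\in\partial p\}$; for sets $\partial A=\bigcup_{p\in A}\partial p$, $\hat\partial B=\bigcup_{e\in B}\hat\partial e$, so $\partial\hat\partial\partial\hat\partial e$ is obtained by applying these operations successively to $\{e\}$. $B_N=[-N,N]^4\cap\mathbb Z^4$; $E_N$, $P_N$ are the oriented edges/plaquettes with all vertices in $B_N$. $G=\mathbb Z_n$. $\Sigma_{E_N}$: maps $\sigma:E_N\to G$ with $\sigma_{-e}=-\sigma_e$; $(d\sigma)_p=\sum_{e\in\partial p}\sigma_e$; $\Sigma^0_{E_N}=\{d\sigma=0\}$. $\mathrm{supp}\,\sigma=\{e:\sigma_e\ne0\}$ and $(\cdot)^+$ denotes the positively oriented elements of a set. *)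

(* Defs.v *)
From mathcomp Require Import all_boot all_order all_algebra.
Set Implicit Arguments. Unset Strict Implicit. Unset Printing Implicit Defensive.
Import GRing.Theory Num.Theory.
Local Open Scope ring_scope.

Definition V := {ffun 'I_4 -> int}.
Definition shift (x : V) (j : 'I_4) : V := [ffun i => x i + (nat_of_bool (i == j))%:Z].

(* oriented edges: (x, j, true) = dx_j = (x, x+e_j) (positively oriented);
   (x, j, false) = -dx_j = (x+e_j, x).  This is a bijective encoding. *)
Definition edge := (V * 'I_4 * bool)%type.
Definition ebase (e : edge) : V := e.1.1.
Definition edir (e : edge) : 'I_4 := e.1.2.
Definition epos (e : edge) : bool := e.2.
Definition eopp (e : edge) : edge := (ebase e, edir e, ~~ epos e).
Definition dx (x : V) (j : 'I_4) : edge := (x, j, true).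

(* oriented plaquettes: (x, j1, j2, true) = dx_{j1} /\ dx_{j2} with j1 < j2,
   (x, j1, j2, false) = its negative *)
Definition plaq := (V * 'I_4 * 'I_4 * bool)%type.
Definition pbase (p : plaq) : V := p.1.1.1.
Definition pj1 (p : plaq) : 'I_4 := p.1.1.2.
Definition pj2 (p : plaq) : 'I_4 := p.1.2.
Definition ppos (p : plaq) : bool := p.2.
Definition is_plaq (p : plaq) : Prop := (pj1 p < pj2 p)%N.

Definition bdpos (x : V) (j1 j2 : 'I_4) : seq edge :=
  [:: dx x j1; dx (shift x j1) j2; eopp (dx (shift x j2) j1); eopp (dx x j2)].
Definition bd (p : plaq) : seq edge :=
  if ppos p then bdpos (pbase p) (pj1 p) (pj2 p)
  else map eopp (bdpos (pbase p) (pj1 p) (pj2 p)).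

Definition eset := edge -> Prop.
Definition pset := plaq -> Prop.
Definition sing (e : edge) : eset := fun e' => e' = e.
Definition hatd (B : eset) : pset := fun p => is_plaq p /\ exists2 e, e \in bd p & B e.
Definition bdset (A : pset) : eset := fun e => exists2 p, A p & e \in bd p.

Definition in_box (N : nat) (x : V) : Prop := forall i, `|x i| <= N%:Z.
Definition in_EN (N : nat) (e : edge) : Prop :=
  in_box N (ebase e) /\ in_box N (shift (ebase e) (edir e)).
Definition in_PN (N : nat) (p : plaq) : Prop :=
  [/\ in_box N (pbase p), in_box N (shift (pbase p) (pj1 p)),
      in_box N (shift (pbase p) (pj2 p)) & in_box N (shift (shift (pbase p) (pj1 p)) (pj2 p))].

Definition dsig (n : nat) (sigma : edge -> 'Z_n) (p : plaq) : 'Z_n :=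
  \sum_(e <- bd p) sigma e.

Definition Sigma0 (N n : nat) (sigma : edge -> 'Z_n) : Prop :=
  (forall e, in_EN N e -> sigma (eopp e) = - sigma e) /\
  (forall p, is_plaq p -> in_PN N p -> dsig sigma p = 0).

Definition supp (N n : nat) (sigma : edge -> 'Z_n) : eset :=
  fun e => in_EN N e /\ sigma e != 0.

(* Main.v *)
Require Import Defs.
From mathcomp Require Import all_boot all_order all_algebra.
From mathcomp Require Import zify.
Import GRing.Theory Num.Theory.
Local Open Scope ring_scope.
Set Implicit Arguments. Unset Strict Implicit. Unset Printing Implicit Defensive.

Definition key (f : edge) : V * 'I_4 := (ebase f, edir f).
Definition keysP (y : V) (a b : 'I_4) : seq (V * 'I_4) :=
  [:: (y, a); (shift y a, b); (shift y b, a); (y, b)].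
Definition flipP (p : plaq) : plaq := (pbase p, pj1 p, pj2 p, ~~ ppos p).

Lemma eoppK : involutive eopp.
Proof. by case=> [[v d] b]; rewrite /eopp /= negbK. Qed.

Lemma bd_flip p : bd (flipP p) = map eopp (bd p).
Proof.
by rewrite /bd /flipP /=; case: (ppos p).

Qed.

Lemma keys_flip p : map key (bd (flipP p)) = map key (bd p).
Proof. by rewrite bd_flip -map_comp. Qed.

Lemma key_eq f f' : key f = key f' -> f = f' \/ f = eopp f'.
Proof.
case: f => [[v d] b]; case: f' => [[v' d'] b']; rewrite /key /ebase /edir /= => -[-> ->].
by case: b; case: b'; [left|right|right|left].
Qed.

Lemma plaq_ex y a b : a != b ->
  exists Q : plaq, is_plaq Q /\ map key (bd Q) =i keysP y a b.
Proof.
move=> ab; case: (ltngtP a b) => [lt|gt|eq].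
- by exists (y, a, b, true); split.
- exists (y, b, a, true); split => // c.
  by rewrite /= !inE; do ?bool_congr.
- by move: ab; rewrite (val_inj eq) eqxx.
Qed.

Lemma hat_ex (B : eset) Q f : is_plaq Q -> f \in bd Q -> (B f \/ B (eopp f)) ->
  exists Q', hatd B Q' /\ map key (bd Q') =i map key (bd Q).
Proof.
move=> pQ fQ [Bf|Bf].
- by exists Q; split => //; split => //; exists f.
- exists (flipP Q); rewrite keys_flip; split => //; split => //.
  exists (eopp f) => //; rewrite bd_flip; exact: map_f.
Qed.

Lemma hatd_plaq B Q : hatd B Q -> is_plaq Q.
Proof. by case. Qed.

Lemma LEN N (e : edge) y a b z a' b' c :
  (forall e', bdset (hatd (bdset (hatd (sing e)))) e' -> in_EN N e') ->
  a != b -> a' != b' -> key e \in keysP y a b -> c \in keysP y a b ->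
  c \in keysP z a' b' -> forall c', c' \in keysP z a' b' -> in_EN N (c', true).
Proof.
move=> H ab ab' ke cP cQ c' c'Q.
have [P0 [pP0 kP0]] := plaq_ex y ab.
have [Q0 [pQ0 kQ0]] := plaq_ex z ab'.
move: ke; rewrite -kP0 => /mapP [f fP0 kf].
have [P1 [hP1 kP1]] : exists P1, hatd (sing e) P1 /\ map key (bd P1) =i map key (bd P0).
  by apply: (hat_ex pP0 fP0); case: (key_eq kf) => ->; [left|right]; rewrite /sing ?eoppK.
move: cP; rewrite -kP0 -kP1 => /mapP [f2 f2P1 kf2].
have B1f2 : bdset (hatd (sing e)) f2 by exists P1.
move: cQ; rewrite -kQ0 => /mapP [f3 f3Q0 kf3].
have [Q1 [hQ1 kQ1]] : exists Q1, hatd (bdset (hatd (sing e))) Q1 /\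
    map key (bd Q1) =i map key (bd Q0).
  by apply: (hat_ex pQ0 f3Q0); rewrite kf2 in kf3; case: (key_eq kf3) => <-; [left|right].
move: c'Q; rewrite -kQ0 -kQ1 => /mapP [f4 f4Q1 ->].
have Hf4 : in_EN N f4 by apply: H; exists Q1.
exact: Hf4.
Qed.

Definition SK N n (sigma : edge -> 'Z_n) (c : V * 'I_4) :=
  in_EN N (c, true) /\ sigma (c, true) != 0.

Ltac coord_at i E :=
  move/ffunP: E => /(_ i); rewrite !ffunE ?eqxx /=.

Lemma keys_neq (y : V) (a b : 'I_4) : a != b ->
  [/\ (y, a) != (shift y a, b), (y, a) != (shift y b, a), (y, a) != (y, b) &
    [/\ (shift y a, b) != (shift y b, a), (shift y a, b) != (y, b)
    & (shift y b, a) != (y, b)]].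
Proof.
move=> ab; have ba : b != a by rewrite eq_sym.
split.
- by apply/eqP; case=> _ E; move: ab; rewrite E eqxx.
- apply/eqP; case=> E; coord_at b E; rewrite ?(negbTE ba) /=; lia.
- by apply/eqP; case=> E; move: ab; rewrite E eqxx.
split.
- by apply/eqP; case=> _ E; move: ab; rewrite E eqxx.
- apply/eqP; case=> E; coord_at a E; rewrite ?(negbTE ab) /=; lia.
- by apply/eqP; case=> _ E; move: ba; rewrite E eqxx.
Qed.


Lemma four (R : zmodType) (s1 s2 s3 s4 : R) :
  s1 + (s2 + (- s3 + (- s4 + 0))) = 0 ->
  [/\ s2 = 0 -> s3 = 0 -> s4 = 0 -> s1 = 0,
      s1 = 0 -> s3 = 0 -> s4 = 0 -> s2 = 0,
      s1 = 0 -> s2 = 0 -> s4 = 0 -> s3 = 0 &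
      s1 = 0 -> s2 = 0 -> s3 = 0 -> s4 = 0].
Proof.
move=> E; split => h1 h2 h3; move: E; rewrite h1 h2 h3 ?oppr0 ?add0r ?addr0 //.
- by move/eqP; rewrite oppr_eq0 => /eqP.
- by move/eqP; rewrite oppr_eq0 => /eqP.
Qed.

Lemma L1core N n (sigma : edge -> 'Z_n) (y : V) (a b : 'I_4) :
  (a < b)%N -> Sigma0 N sigma ->
  (forall c', c' \in keysP y a b -> in_EN N (c', true)) ->
  forall c, c \in keysP y a b -> SK N sigma c ->
  exists2 c', c' \in keysP y a b & c' != c /\ SK N sigma c'.
Proof.
move=> ab [HA HP] HE c cin [cEN cnz].
have ab' : a != b by rewrite neq_ltn ab.
have [n12 n13 n14 [n23 n24 n34]] := keys_neq y ab'.
have i1 : (y, a) \in keysP y a b by rewrite !inE eqxx.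
have i2 : (shift y a, b) \in keysP y a b by rewrite !inE eqxx ?orbT.
have i3 : (shift y b, a) \in keysP y a b by rewrite !inE eqxx ?orbT.
have i4 : (y, b) \in keysP y a b by rewrite !inE eqxx ?orbT.
have PN : in_PN N (y, a, b, true).
  case: (HE _ i1) => h1 h1'; case: (HE _ i2) => _ h2; case: (HE _ i4) => _ h4.
  by split.
have := HP (y, a, b, true) ab PN.
rewrite /dsig /= !big_cons big_nil.
have E3 : sigma (shift y b, a, false) = - sigma (shift y b, a, true) := HA _ (HE _ i3).
have E4 : sigma (y, b, false) = - sigma (y, b, true) := HA _ (HE _ i4).
rewrite E3 E4 => /four [F1 F2 F3 F4].
have nz : forall c', c' \in keysP y a b -> sigma (c', true) != 0 -> SK N sigma c'.
  by move=> c' h h'; split => //; apply: HE.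
move: cin cnz; rewrite !inE => /or4P [] /eqP -> cnz.
- case: (eqVneq (sigma (shift y a, b, true)) 0) => [z2|n2]; last first.
    by exists (shift y a, b) => //; split; [rewrite eq_sym | apply: nz].
  case: (eqVneq (sigma (shift y b, a, true)) 0) => [z3|n3]; last first.
    by exists (shift y b, a) => //; split; [rewrite eq_sym | apply: nz].
  case: (eqVneq (sigma (y, b, true)) 0) => [z4|n4]; last first.
    by exists (y, b) => //; split; [rewrite eq_sym | apply: nz].
  by rewrite F1 ?eqxx in cnz.
- case: (eqVneq (sigma (y, a, true)) 0) => [z2|n2]; last first.
    by exists (y, a) => //; split; [ | apply: nz].
  case: (eqVneq (sigma (shift y b, a, true)) 0) => [z3|n3]; last first.
    by exists (shift y b, a) => //; split; [rewrite eq_sym | apply: nz].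
  case: (eqVneq (sigma (y, b, true)) 0) => [z4|n4]; last first.
    by exists (y, b) => //; split; [rewrite eq_sym | apply: nz].
  by rewrite F2 ?eqxx in cnz.
- case: (eqVneq (sigma (y, a, true)) 0) => [z2|n2]; last first.
    by exists (y, a) => //; split; [ | apply: nz].
  case: (eqVneq (sigma (shift y a, b, true)) 0) => [z3|n3]; last first.
    by exists (shift y a, b) => //; split; [ | apply: nz].
  case: (eqVneq (sigma (y, b, true)) 0) => [z4|n4]; last first.
    by exists (y, b) => //; split; [rewrite eq_sym | apply: nz].
  by rewrite F3 ?eqxx in cnz.
- case: (eqVneq (sigma (y, a, true)) 0) => [z2|n2]; last first.
    by exists (y, a) => //; split; [ | apply: nz].
  case: (eqVneq (sigma (shift y a, b, true)) 0) => [z3|n3]; last first.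
    by exists (shift y a, b) => //; split; [ | apply: nz].
  case: (eqVneq (sigma (shift y b, a, true)) 0) => [z4|n4]; last first.
    by exists (shift y b, a) => //; split; [ | apply: nz].
  by rewrite F4 ?eqxx in cnz.
Qed.

Lemma keysP_sym y (a b : 'I_4) : keysP y b a =i keysP y a b.
Proof. by move=> c; rewrite !inE; do ?bool_congr. Qed.

Lemma L1 N n (sigma : edge -> 'Z_n) (y : V) (a b : 'I_4) :
  a != b -> Sigma0 N sigma ->
  (forall c', c' \in keysP y a b -> in_EN N (c', true)) ->
  forall c, c \in keysP y a b -> SK N sigma c ->
  exists2 c', c' \in keysP y a b & c' != c /\ SK N sigma c'.
Proof.
move=> ab HS HE c cin sc.
case: (ltngtP a b) => [lt|gt|eq].
- exact: L1core.
- have HE' : forall c', c' \in keysP y b a -> in_EN N (c', true).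
    by move=> c'; rewrite keysP_sym; apply: HE.
  have cin' : c \in keysP y b a by rewrite keysP_sym.
  have [c' c'in h] := L1core gt HS HE' cin' sc.
  by exists c' => //; rewrite -keysP_sym.
- by move: ab; rewrite (val_inj eq) eqxx.
Qed.

Set Bullet Behavior "Strict Subproofs".
Definition lo (c : V * 'I_4) (i : 'I_4) : int := c.1 i.
Definition hi (c : V * 'I_4) (i : 'I_4) : int := c.1 i + (nat_of_bool (i == c.2))%:Z.
Definition unshift (x : V) (a : 'I_4) : V := [ffun i => x i - (nat_of_bool (i == a))%:Z].

Lemma shift_unshift x a : shift (unshift x a) a = x.
Proof. by apply/ffunP => i; rewrite !ffunE subrK. Qed.

Definition Fs (x : V) (j k : 'I_4) (s : bool) (c : V * 'I_4) :=
  [/\ (if s then hi c k = x k + 1 else lo c k = x k - 1),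
      (if s then x k <= lo c k else hi c k <= x k),
      (forall i, i != k -> i != j -> lo c i = x i /\ hi c i = x i),
      x j <= lo c j & hi c j <= x j + 1].

Definition plaqS (x : V) (j k : 'I_4) (s : bool) :=
  keysP (if s then x else unshift x k) j k.

Lemma Fs_cands x j k s c : k != j -> c \in plaqS x j k s -> c != (x, j) -> Fs x j k s c.
Proof.
move=> kj; have jk : j != k by rewrite eq_sym.
case: s; rewrite /plaqS /keysP ?shift_unshift !inE => /or4P [] /eqP -> //; rewrite ?eqxx // => _.
all: split; [ | | move=> i ik ij; split | | ];
  rewrite /hi /lo /= ?ffunE ?eqxx ?(negbTE kj) ?(negbTE jk) ?(negbTE ik) ?(negbTE ij) /=; lia.
Qed.

Lemma Fsep x j k s c k' s' c' : Fs x j k s c -> Fs x j k' s' c' -> k != j -> k' != j ->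
  (k != k') || (s != s') -> c != c'.
Proof.
move=> [A1 B1 C1 D1 E1] [A2 B2 C2 D2 E2] kj k'j h; apply/eqP => E; subst c'.
case: (eqVneq k k') => [ekk|kk'].
- subst k'; move: h; rewrite eqxx /=.
  by case: s A1 B1; case: s' A2 B2 => //= *; lia.
- have [l h'] := C2 k kk' kj.
  by clear h; case: s A1 B1 => /= *; lia.
Qed.

Lemma Fsep_e x j k s c : Fs x j k s c -> k != j -> c != (x, j).
Proof.
move=> [A1 B1 C1 D1 E1] kj; apply/eqP => E; subst c.
move: A1; rewrite /hi /lo /= (negbTE kj) /=.
by case: s B1 => /= *; lia.
Qed.

Definition Hf (x : V) (j : 'I_4) (h : V * 'I_4) :=
  (exists a b, [/\ a != b, a != j, b != j, lo h a = x a + 1 & hi h b = x b + 1])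
  \/ lo h j = x j - 1 \/ hi h j = x j + 1 + 1.

Lemma Hsep x j h k s c : Hf x j h -> Fs x j k s c -> k != j -> h != c.
Proof.
move=> HF [A1 B1 C1 D1 E1] kj; apply/eqP => E; subst c.
case: HF => [[a [b [ab aj bj la hb]]]|[H|H]]; try lia.
case: (eqVneq k a) => [eka|ka].
- subst k; have ba : b != a by rewrite eq_sym.
  have [_ h2] := C1 b ba bj; lia.
- have ak : a != k by rewrite eq_sym.
  have [h2 _] := C1 a ak aj; lia.
Qed.

Lemma Hsep_e x j h : Hf x j h -> h != (x, j).
Proof.
move=> HF; apply/eqP => E; subst h.
case: HF => [[a [b [ab aj bj la hb]]]|[H|H]].
- move: la; rewrite /lo /=; lia.
- move: H; rewrite /lo /=; lia.
- move: H; rewrite /hi /= eqxx /=; lia.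
Qed.

Ltac glia := repeat match goal with |- context [@fun_of_fin ?A ?B ?C ?x ?i] =>
  let t := fresh "t" in move: (x i) => t end; lia.

Lemma Gex N n (sigma : edge -> 'Z_n) (e : edge) x j k s :
  key e = (x, j) ->
  (forall e', bdset (hatd (bdset (hatd (sing e)))) e' -> in_EN N e') ->
  Sigma0 N sigma -> SK N sigma (x, j) -> k != j ->
  exists g, Fs x j k s g /\ SK N sigma g.
Proof.
move=> ke H2 HS SKe kj.
have jk : j != k by rewrite eq_sym.
have xin : (x, j) \in plaqS x j k s.
  by rewrite /plaqS; case: s; rewrite /keysP ?shift_unshift !inE eqxx ?orbT.
have kein : key e \in plaqS x j k s by rewrite ke.
have HE := LEN H2 jk jk kein xin xin.
have [g gin [gne SKg]] := L1 jk HS HE xin SKe.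
by exists g; split => //; apply: Fs_cands.
Qed.

Lemma Hex N n (sigma : edge -> 'Z_n) (e : edge) x j k k' :
  key e = (x, j) ->
  (forall e', bdset (hatd (bdset (hatd (sing e)))) e' -> in_EN N e') ->
  Sigma0 N sigma -> SK N sigma (x, j) -> k != j -> k' != j -> k != k' ->
  exists h, Hf x j h /\ SK N sigma h.
Proof.
move=> ke H2 HS SKe kj k'j kk'.
have jk : j != k by rewrite eq_sym.
have jk' : j != k' by rewrite eq_sym.
have xin : (x, j) \in keysP x j k by rewrite !inE eqxx.
have kein : key e \in keysP x j k by rewrite ke.
have HE := LEN H2 jk jk kein xin xin.
have [g gin [gne SKg]] := L1 jk HS HE xin SKe.
move: gin gne SKg; rewrite !inE => /or4P [] /eqP -> //; rewrite ?eqxx // => _ SKg.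
-
  have gin' : (shift x j, k) \in keysP x j k by rewrite !inE eqxx ?orbT.
  have gQ : (shift x j, k) \in keysP (shift x j) j k by rewrite !inE eqxx ?orbT.
  have HE' := LEN H2 jk jk kein gin' gQ.
  have [h hin [hne SKh]] := L1 jk HS HE' gQ SKg.
  move: hin hne SKh; rewrite !inE => /or4P [] /eqP -> //; rewrite ?eqxx // => _ SKh.
  all: apply: (fun H => ex_intro _ _ (conj H SKh)); right; right.
  all: rewrite /hi /= ?ffunE ?eqxx ?(negbTE kj) ?(negbTE jk) /=.
  all: move: (x j) (x k) (x k') => t1 t2 t3; lia.
-
  have gin' : (shift x k, j) \in keysP x j k by rewrite !inE eqxx ?orbT.
  have gQ : (shift x k, j) \in keysP (shift x k) j k' by rewrite !inE eqxx ?orbT.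
  have HE' := LEN H2 jk jk' kein gin' gQ.
  have [h hin [hne SKh]] := L1 jk' HS HE' gQ SKg.
  have k'k : k' != k by rewrite eq_sym.
  move: hin hne SKh; rewrite !inE => /or4P [] /eqP -> //; rewrite ?eqxx // => _ SKh.
  all: apply: (fun H => ex_intro _ _ (conj H SKh)); left; exists k, k'; split => //.
  all: rewrite /hi /lo /= ?ffunE ?eqxx ?(negbTE kj) ?(negbTE jk) ?(negbTE k'j)
         ?(negbTE jk') ?(negbTE kk') ?(negbTE k'k) /=.
  all: move: (x j) (x k) (x k') => t1 t2 t3; lia.
-
  have gin' : (x, k) \in keysP x j k by rewrite !inE eqxx ?orbT.
  have gQ : (x, k) \in keysP (unshift x j) j k
    by rewrite /keysP shift_unshift !inE eqxx ?orbT.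
  have HE' := LEN H2 jk jk kein gin' gQ.
  have [h hin [hne SKh]] := L1 jk HS HE' gQ SKg.
  move: hin hne SKh; rewrite /keysP shift_unshift !inE => /or4P [] /eqP -> //; rewrite ?eqxx // => _ SKh.
  all: apply: (fun H => ex_intro _ _ (conj H SKh)); right; left.
  all: rewrite /lo /= ?ffunE ?eqxx ?(negbTE kj) ?(negbTE jk) /=.
  all: move: (x j) (x k) (x k') => t1 t2 t3; lia.
Qed.

Lemma dirs_ex (j : 'I_4) : exists k1 k2 k3 : 'I_4,
  [/\ k1 != j, k2 != j, k3 != j & [/\ k1 != k2, k1 != k3 & k2 != k3]].
Proof.
case: j => [[|[|[|[|m]]]] Hm] //.
- by exists (Ordinal (isT : (1 < 4)%N)), (Ordinal (isT : (2 < 4)%N)), (Ordinal (isT : (3 < 4)%N)).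
- by exists (Ordinal (isT : (0 < 4)%N)), (Ordinal (isT : (2 < 4)%N)), (Ordinal (isT : (3 < 4)%N)).
- by exists (Ordinal (isT : (0 < 4)%N)), (Ordinal (isT : (1 < 4)%N)), (Ordinal (isT : (3 < 4)%N)).
- by exists (Ordinal (isT : (0 < 4)%N)), (Ordinal (isT : (1 < 4)%N)), (Ordinal (isT : (2 < 4)%N)).
Qed.

Unset Implicit Arguments.

Theorem mainTheorem5 (N n : nat) (sigma : edge -> 'Z_n) :
  (1 < n)%N ->
  Sigma0 N sigma ->
  (exists e, supp N sigma e) ->
  (exists e, supp N sigma e /\
     (forall e', bdset (hatd (bdset (hatd (sing e)))) e' -> in_EN N e')) ->
  exists s : seq edge,
    [/\ size s = 8%N, uniq s & forall e, e \in s -> supp N sigma e /\ epos e].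
Proof.
move=> _ HS _ [e [[eEN enz] H2]].
move: eEN enz H2; case: e => [[x j] b] eEN enz H2.
have ke : key (x, j, b) = (x, j) by [].
have SKe : SK N sigma (x, j).
  split => //; case: b eEN enz {H2 ke} => // eEN.
  by rewrite (HS.1 (x, j, true) eEN) oppr_eq0.
have [k1 [k2 [k3 [k1j k2j k3j [k12 k13 k23]]]]] := dirs_ex j.
have [g1 [F1 S1]] := Gex true ke H2 HS SKe k1j.
have [g2 [F2 S2]] := Gex false ke H2 HS SKe k1j.
have [g3 [F3 S3]] := Gex true ke H2 HS SKe k2j.
have [g4 [F4 S4]] := Gex false ke H2 HS SKe k2j.
have [g5 [F5 S5]] := Gex true ke H2 HS SKe k3j.
have [g6 [F6 S6]] := Gex false ke H2 HS SKe k3j.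
have [h [Hh Sh]] := Hex ke H2 HS SKe k1j k2j k12.
exists (map (fun c => (c, true)) [:: (x, j); g1; g2; g3; g4; g5; g6; h]).
split.
- by [].
- rewrite map_inj_uniq; last by move=> c c' [].
  rewrite /= !inE !negb_or.
  repeat (apply/andP; split) => //.
  all: first [ by rewrite eq_sym; apply: Fsep_e; eassumption
             | by rewrite eq_sym; apply: Hsep_e; eassumption
             | by rewrite eq_sym; apply: Hsep; eassumption
             | by apply: Fsep; try eassumption; rewrite ?eqxx ?k12 ?k13 ?k23 ].
- move=> c /mapP [c' c'in ->]; split => //.
  move: c'in; rewrite !inE => /orP [/eqP ->|/orP [/eqP ->|/orP [/eqP ->|/orP [/eqP ->|
    /orP [/eqP ->|/orP [/eqP ->|/orP [/eqP ->|/eqP ->]]]]]]]; by [].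
Qed.
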